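(* Let $\alpha>0$. Suppose the kernel $W(x,y,h)$ is such that $$u^{\alpha*}_\theta(y)=M f_\theta^\alpha(y)u_\theta(y)+L\quad\text{for all }y,$$ for a vector $L\in\mathbb{R}^p$ depending only on $\alpha$ and $h$, and a nonsingular $p\times p$ matrix $M$ depending on $\theta,\alpha,h$, where for each $j=1,\dots,p$ either $\int u_{\theta_j}f_\theta^{1+\alpha}=0$ or the $j$-th column of $M$ does not depend on $\theta$. Then the estimating equation for the minimum DPD$^*$ estimator is the same as that of the minimum DPD estimator, and hence the two estimators are equal.
   Context: $\{f_\theta:\theta\in\Theta\subseteq\mathbb{R}^p\}$ is a parametric family of Lebesgue densities on $\mathbb{R}$, $u_\theta=\nabla_\theta\log f_\theta$ with components $u_{\theta_j}$, and $X_1,\dots,X_n$ is a sample with empirical distribution $G_n$. $W(x,y,h)\ge0$ is a kernel with bandwidth $h>0$, a probability density in $x$ for each $y$; $f^*_\theta(x)=\int W(x,y,h)f_\theta(y)dy$, $g_n^*(x)=\frac1n\sum_iW(x,X_i,h)$, $\tilde u_\theta=\nabla_\theta\log f^*_\theta$, and $u^{\alpha*}_\theta(y)=\int\tilde u_\theta(x)\{f^*_\theta(x)\}^\alpha W(x,y,h)\,dx$. The minimum density power divergence (DPD) estimator solves $\frac1n\sum_{i=1}^nf_\theta^\alpha(X_i)u_\theta(X_i)-\int f_\theta^{1+\alpha}u_\theta=0$ (minimizing $d_\alpha(g,f_\theta)=\int f_\theta^{1+\alpha}-\frac{1+\alpha}{\alpha}\int f_\theta^\alpha g+\frac1\alpha\int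 g^{1+\alpha}$ with $g$ replaced by the empirical distribution). The minimum DPD$^*$ estimator minimizes $d_\alpha(g_n^*,f^*_\theta)$ and solves $\int(f^*_\theta)^\alpha g_n^*\tilde u_\theta-\int(f^*_\theta)^{1+\alpha}\tilde u_\theta=0$, equivalently $\frac1n\sum_{i=1}^nu^{\alpha*}_\theta(X_i)-E_\theta[u^{\alpha*}_\theta(Y)]=0$ with $Y\sim f_\theta$. *)

(* Defs.v *)
From HB Require Import structures.
From mathcomp Require Import all_boot all_order all_algebra.
From mathcomp Require Import all_classical all_reals all_analysis.
Set Implicit Arguments. Unset Strict Implicit. Unset Printing Implicit Defensive.
Import Order.TTheory GRing.Theory Num.Theory.
Import numFieldNormedType.Exports.
Local Open Scope classical_set_scope.
Local Open Scope ring_scope.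

Section Defs.
Variable R : realType.
Variable p : nat.

Notation param := 'cV[R]_p.

Definition lebRint (g : R -> R) : R := Rintegral (@lebesgue_measure R) setT g.

Definition gradlog (F : param -> R -> R) (theta : param) (x : R) : 'cV[R]_p :=
  \col_j ('D_(delta_mx j 0 : param) (fun t : param => ln (F t x)) theta).

Definition score (f : param -> R -> R) := gradlog f.

Definition fstar (W : R -> R -> R -> R) (h : R) (f : param -> R -> R)
    (theta : param) (x : R) : R :=
  lebRint (fun y => W x y h * f theta y).

Definition utilde W h f := gradlog (fstar W h f).

Definition ualphastar (W : R -> R -> R -> R) (h alpha : R)
    (f : param -> R -> R) (theta : param) (y : R) : 'cV[R]_p :=
  \col_j lebRint (fun x => utilde W h f theta x j 0
                         * (fstar W h f theta x `^ alpha) * W x y h).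

Definition dpd_eq (alpha : R) (f : param -> R -> R) (n : nat) (X : 'I_n -> R)
    (theta : param) : 'cV[R]_p :=
  n%:R^-1 *: (\sum_(i < n) (f theta (X i) `^ alpha) *: score f theta (X i))
  - \col_j lebRint (fun y => f theta y `^ (1 + alpha) * score f theta y j 0).

Definition dpdstar_eq (W : R -> R -> R -> R) (h alpha : R) (f : param -> R -> R)
    (n : nat) (X : 'I_n -> R) (theta : param) : 'cV[R]_p :=
  n%:R^-1 *: (\sum_(i < n) ualphastar W h alpha f theta (X i))
  - \col_j lebRint (fun y => ualphastar W h alpha f theta y j 0 * f theta y).

End Defs.

(* Main.v *)
Require Import Defs.
From HB Require Import structures.
From mathcomp Require Import all_boot all_order all_algebra.
From mathcomp Require Import all_classical all_reals all_analysis.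
From mathcomp Require Import ring lra.
Import Order.TTheory GRing.Theory Num.Theory.
Import numFieldNormedType.Exports.
Local Open Scope classical_set_scope.
Local Open Scope ring_scope.


Lemma Rint_sum (R : realType) (I : Type) (s : seq I) (g : I -> R -> R) :
  (forall i, (@lebesgue_measure R).-integrable setT (EFin \o g i)) ->
  (@lebesgue_measure R).-integrable setT (EFin \o (fun x => \sum_(i <- s) g i x))
  /\ lebRint (fun x => \sum_(i <- s) g i x) = \sum_(i <- s) lebRint (g i).
Proof.
move=> hg; elim: s => [|i s [ih1 ih2]].
  split.
    apply: (eq_integrable _ (cst 0%E)) => //; last exact: integrable0.
    by move=> x _ /=; rewrite big_nil.
  rewrite big_nil /lebRint.
  under eq_Rintegral do rewrite big_nil.
  by rewrite Rintegral_cst // mul0r.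
split.
  have := integrableD measurableT (hg i) ih1.
  apply: eq_integrable => // x _ /=; by rewrite big_cons.
rewrite big_cons -ih2.
have -> : (fun x => \sum_(i0 <- i :: s) g i0 x) = (fun x => g i x + \sum_(i0 <- s) g i0 x).
  by apply/funext => x; rewrite big_cons.
by rewrite /lebRint RintegralD.
Qed.

Theorem lemma7 (R : realType) (p : nat) (Theta : set 'cV[R]_p)
  (f : 'cV[R]_p -> R -> R) (W : R -> R -> R -> R) (h alpha : R)
  (L : 'cV[R]_p) (M : 'cV[R]_p -> 'M[R]_p) :
  0 < alpha -> 0 < h ->
  (* f_theta is a Lebesgue probability density for theta in Theta *)
  (forall theta, Theta theta ->
     measurable_fun setT (f theta) /\ (forall x, 0 <= f theta x) /\
     (\int[@lebesgue_measure R]_x (f theta x)%:E = 1)%E) ->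
  (* W(.,y,h) is a probability density for every y *)
  (forall y, measurable_fun setT (fun x => W x y h) /\
     (forall x, 0 <= W x y h) /\
     (\int[@lebesgue_measure R]_x (W x y h)%:E = 1)%E) ->
  (* the integrals int u_{theta_j} f_theta^{1+alpha} exist *)
  (forall theta, Theta theta -> forall j : 'I_p,
     (@lebesgue_measure R).-integrable setT
       (fun y => (f theta y `^ (1 + alpha) * score f theta y j 0)%:E)) ->
  (* structural assumption on the kernel *)
  (forall theta, Theta theta -> forall y,
     ualphastar W h alpha f theta y
     = M theta *m ((f theta y `^ alpha) *: score f theta y) + L) ->
  (forall theta, Theta theta -> M theta \in unitmx) ->
  (forall j : 'I_p,
     (forall theta, Theta theta ->
        lebRint (fun y => score f theta y j 0 * f theta y `^ (1 + alpha)) = 0)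
     \/ (forall theta theta', Theta theta -> Theta theta' ->
        col j (M theta) = col j (M theta'))) ->
  (* conclusion: same estimating equation, hence same estimator *)
  forall (n : nat) (X : 'I_n -> R), (0 < n)%N ->
  forall theta, Theta theta ->
    (dpdstar_eq W h alpha f X theta = 0 <-> dpd_eq alpha f X theta = 0).
Proof.
move=> a0 _ hf _ hint hu hM _ n X n0 theta th.
have [mf [f0 f1]] := hf theta th.
set s := score f theta.
set c : 'cV[R]_p := \col_j lebRint (fun y => f theta y `^ (1 + alpha) * s y j 0).
have intf : (@lebesgue_measure R).-integrable setT (EFin \o f theta).
  apply/integrableP; split; first exact/measurable_realfun.measurable_EFinP.
  under eq_integral do rewrite /= ger0_norm ?f0//.
  by rewrite f1 ltry.
have Edec : \col_j lebRint (fun y => ualphastar W h alpha f theta y j 0 * f theta y)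
    = M theta *m c + L.
  apply/matrixP => j k; rewrite !mxE.
  have -> : (fun y => ualphastar W h alpha f theta y j 0 * f theta y) =
     (fun y => \sum_(k0 < p) (M theta j k0 * (f theta y `^ (1 + alpha) * s y k0 0))
        + L j 0 * f theta y).
    apply/funext => y; rewrite hu // !mxE mulrDl; congr (_ + _).
    rewrite big_distrl /=; apply: eq_bigr => k0 _.
    rewrite !mxE powRD; last first.
      by rewrite (_ : (1 + alpha == 0) = false) // gt_eqF // addr_gt0.
    rewrite powRr1 // /s; lra.
  have hint' : forall k0, (@lebesgue_measure R).-integrable setT
      (EFin \o (fun y => M theta j k0 * (f theta y `^ (1 + alpha) * s y k0 0))).
    move=> k0; have := integrableZl measurableT (M theta j k0) (hint theta th k0).
    by apply: eq_integrable => // y _ /=; rewrite EFinM.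
  have [I1 I2] := @Rint_sum R _ (index_enum 'I_p) _ hint'.
  rewrite /lebRint RintegralD //; last first.
    have := integrableZl measurableT (L j 0) intf.
    by apply: eq_integrable => // y _ /=; rewrite EFinM.
  rewrite ord1 RintegralZl // {2}/Rintegral f1 /= mulr1; congr (_ + _).
  move: I2; rewrite /lebRint => ->.
  apply: eq_bigr => k0 _; rewrite mxE /lebRint RintegralZl //.
  exact: hint.
have key : dpdstar_eq W h alpha f X theta = M theta *m dpd_eq alpha f X theta.
  rewrite /dpdstar_eq Edec /dpd_eq -/s -/c.
  under eq_bigr do rewrite hu //.
  rewrite big_split /= -mulmx_sumr sumr_const card_ord.
  have ha : forall v : 'cV[R]_p, n%:R%:A^-1 *: (v *+ n) = v.
    move=> v; rewrite -[v *+ n]scaler_nat scalerA.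
    rewrite [X in X^-1]scaler_nat mulVf ?scale1r // pnatr_eq0 -lt0n.
    by [].
  rewrite mulmxBr -scalemxAr scalerDr -[L *+ n]scaler_nat scalerA.
  rewrite mulVf ?scale1r; last by rewrite pnatr_eq0 -lt0n.
  by rewrite opprD addrACA subrr addr0.
rewrite key; split => [H|->]; last by rewrite mulmx0.
by rewrite -(mulKmx (hM theta th) (dpd_eq alpha f X theta)) H mulmx0.
Qed.
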